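(* Let $0<p<1$, $q=1-p$, and let $X\sim\mathcal{UNB}(2,p)$. Then $P(X=x)=p(1-p)^x$ for all $x=0,1,2,\dots$, i.e. $X$ is geometric with parameter $p$.
   Context: $\mathcal{UNB}(r,p)$ ($r>0$, $0<p<1$) is the law of $X$ where $N$ is negative binomial with $P(N=n)=\binom{r+n-1}{n}p^rq^n$, $n\ge0$, and $X\mid N=n$ is uniform on $\{0,1,\dots,n\}$; its pmf is $\frac{q^xp^r}{1+x}\binom{r+x-1}{x}{}_2F_1(1,r+x;2+x;q)$, where ${}_2F_1$ is the Gauss hypergeometric function. *)

(* Defs.v *)
From HB Require Import structures.
From mathcomp Require Import all_boot all_order all_algebra.
From mathcomp Require Import all_classical all_reals all_analysis.
Set Implicit Arguments. Unset Strict Implicit. Unset Printing Implicit Defensive.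
Import Order.TTheory GRing.Theory Num.Theory.
Local Open Scope ring_scope.

(* Generalized binomial coefficient binom(r+n-1, n) = r(r+1)...(r+n-1)/n! *)
Definition gbinom_nb {R : realType} (r : R) (n : nat) : R :=
  (\prod_(k < n) (r + k%:R)) / (n`!)%:R.

Definition negbin_pmf {R : realType} (r p : R) (n : nat) : R :=
  gbinom_nb r n * (p `^ r) * (1 - p) ^+ n.

(* UNB(r,p) pmf: X | N = n uniform on {0,...,n}, so
   P(X = x) = sum_{n >= x} P(N = n) / (n+1)   (a series of nonnegative terms,
   taken in the extended reals). *)
Definition unb_pmf {R : realType} (r p : R) (x : nat) : \bar R :=
  (\sum_(x <= n <oo) (negbin_pmf r p n / (n.+1)%:R)%:E)%E.

(* Main.v *)
Require Import Defs.
From HB Require Import structures.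
From mathcomp Require Import all_boot all_order all_algebra.
From mathcomp Require Import all_classical all_reals all_analysis.
From mathcomp Require Import ring.
Import Order.TTheory GRing.Theory Num.Theory.
Import numFieldNormedType.Exports.
Local Open Scope ring_scope.

Lemma gbinom2 (R : realType) (n : nat) : gbinom_nb (2 : R) n = n.+1%:R.
Proof.
rewrite /gbinom_nb.
have -> : \prod_(k < n) (2 + k%:R) = (n.+1`!)%:R :> R.
  elim: n => [|n IH]; first by rewrite big_ord0.
  by rewrite big_ord_recr /= IH factS [in RHS]natrM mulrC -natrD add2n.
by rewrite factS natrM mulfK // pnatr_eq0 -lt0n fact_gt0.
Qed.

Lemma term2 (R : realType) (p : R) (hp0 : 0 < p) (n : nat) :
  negbin_pmf 2 p n / n.+1%:R = - (p * (1 - p) ^+ n.+1) - - (p * (1 - p) ^+ n).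
Proof.
rewrite /negbin_pmf gbinom2 powR_mulrn ?ltW // -!mulrA mulrC -!mulrA.
rewrite mulVf ?pnatr_eq0 // mulr1 exprS; ring.
Qed.

Theorem mainTheorem6 (R : realType) (p : R) (hp0 : 0 < p) (hp1 : p < 1) :
  forall x : nat, unb_pmf 2 p x = (p * (1 - p) ^+ x)%:E.
Proof.
move=> x; rewrite /unb_pmf.
apply: cvg_lim => //.
have Hr : ((fun N => \sum_(x <= n < N) (negbin_pmf 2 p n / n.+1%:R)) @ \oo
    --> (p * (1 - p) ^+ x)%R)%classic.
  have -> : p * (1 - p) ^+ x = p * (1 - p) ^+ x - p * 0 by rewrite mulr0 subr0.
  have Hg : ((fun N => p * (1 - p) ^+ x - p * (1 - p) ^+ N) @ \oo
      --> (p * (1 - p) ^+ x - p * 0)%R)%classic.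
    apply: cvgB; first exact: cvg_cst.
    apply: cvgMr; apply: cvg_expr.
    by rewrite ger0_norm ?subr_ge0 ?ltW // ltrBlDr ltrDl.
  apply: cvg_trans Hg; apply: near_eq_cvg.
  near=> N.
  rewrite (telescope_sumr_eq (fun n => - (p * (1 - p) ^+ n))).
  - by rewrite opprK addrC.
  - by near: N; exists x.
  - by move=> k _; rewrite term2.
rewrite (_ : (fun N => _) = (fun N => (\sum_(x <= n < N) (negbin_pmf 2 p n / n.+1%:R))%:E)); last first.
  by apply/funext => N; rewrite sumEFin.
apply: cvg_EFin; first exact: nearW.
exact: Hr.
Unshelve. all: by end_near.
Qed.
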